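(* Let $\mathcal{E}_{\mathrm{MUB}}$ be the minimal Clifford measurement ensemble described in the context, $O$ a Hermitian observable not proportional to the identity, and $O_0=O-2^{-n}\operatorname{tr}(O)\mathbb{I}$. For $U\in\mathcal{E}_{\mathrm{MUB}}$ let $\Phi_{U,\mathbf{b}}=U^{\dagger}|\mathbf{b}\rangle\langle\mathbf{b}|U$, $B_U=\max_{\mathbf{b}\in\{0,1\}^n}|\operatorname{tr}(\Phi_{U,\mathbf{b}}O_0)|$ and $p_U=B_U/\sum_{U'\in\mathcal{E}_{\mathrm{MUB}}}B_{U'}$. Consider the biased-MCM estimator: sample $U$ with probability $p_U$, measure $U\rho U^{\dagger}$ in the computational basis obtaining $\mathbf{b}$ with probability $\langle\mathbf{b}|U\rho U^{\dagger}|\mathbf{b}\rangle$, and output $\hat O=\operatorname{tr}(O_0\Phi_{U,\mathbf{b}})/p_U+2^{-n}\operatorname{tr}(O)$. Then for every state $\rho$, $$\mathrm{Var}(\hat O)\le\Big(\sum_{U\in\mathcal{E}_{\mathrm{MUB}}}B_U\Big)^2\le\mathcal{D}(O_0)^2,$$ where $\mathcal{D}(A)=2^{-n}\sum_{P\in\mathbf{P}^n}|\operatorname{tr}(PA)|$ is the stabilizer norm and $\mathbf{P}^n$ is the set of the $4^n$ $n$-fold tensor products of $\mathbb{I}_2,X,Y,Z$.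
   Context: Galois arithmetic: fix an irreducible polynomial $P_n(x)$ of degree $n$ over $\mathrm{GF}(2)$; integers $a=\sum_i a_i2^i\in\{0,\dots,2^n-1\}$ are identified with polynomials $\sum_ia_ix^i$ and row vectors $(a_0,\dots,a_{n-1})$, and $a\odot b=a(x)b(x)\bmod P_n(x)$. Let $\Gamma_{k,j}$ be the coefficient of $x^j$ in $x^k\bmod P_n$, and $M_n^{(0)}$ the $n\times n$ binary matrix with entries $\Gamma_{p+q,0}$. For $v\in\{0,\dots,2^n-1\}$ let $\alpha_{v,i,j}$ be the $j$-th entry of $(v\odot 2^i)M_n^{(0)}$ mod 2 and $g_i^{(v)}=\sqrt{-1}^{\,\alpha_{v,i,i}}X_i\prod_jZ_j^{\alpha_{v,i,j}}$ ($X_i,Z_i$ Paulis on qubit $i$). $\mathcal{E}_{\mathrm{MUB}}=\{\mathbb{I}\}\cup\{U_v\}_{v=0}^{2^n-1}$, where $U_v$ is a Clifford unitary with $U_v^{\dagger}Z_iU_v=\pm g_i^{(v)}$ for all $i$. Unitaries with $p_U=0$ are never sampled. The variance is over the random $U$ and $\mathbf{b}$. *)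

(* Defs.v *)
From HB Require Import structures.
From mathcomp Require Import all_boot all_order all_algebra all_field.
Set Implicit Arguments. Unset Strict Implicit. Unset Printing Implicit Defensive.
Import Order.TTheory GRing.Theory Num.Theory.
Local Open Scope ring_scope.

(* A computational basis index a : 'I_(2^n) is identified with the bit string
   (a_0,...,a_{n-1}), a = sum_i a_i 2^i; qubit i carries bit i. *)
Definition bit (i a : nat) : bool := odd (a %/ 2 ^ i).
Definition bito (i a : nat) : 'I_2 := inord (nat_of_bool (bit i a)).

Definition adj (m k : nat) (A : 'M[algC]_(m, k)) : 'M[algC]_(k, m) :=
  (map_mx (fun x : algC => x^*) A)^T.

(* single-qubit operator A acting on qubit i (tensored with identities) *)
Definition op_on (n : nat) (i : 'I_n) (A : 'M[algC]_2) : 'M[algC]_(2 ^ n) :=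
  \matrix_(a, b) (if [forall j : 'I_n, (j != i) ==> (bit j a == bit j b)]
                  then A (bito i a) (bito i b) else 0).

Definition sX : 'M[algC]_2 := \matrix_(p, q) (if p != q then 1 else 0).
Definition sY : 'M[algC]_2 :=
  \matrix_(p, q) (if p == q then 0 else if val p == 0%N then - 'i else 'i).
Definition sZ : 'M[algC]_2 :=
  \matrix_(p, q) (if p == q then (if val p == 0%N then 1 else -1) else 0).

Definition pauli1 (k : 'I_4) : 'M[algC]_2 :=
  match val k with 0 => 1%:M | 1 => sX | 2 => sY | _ => sZ end.

Definition pauli_string (n : nat) (s : {ffun 'I_n -> 'I_4}) : 'M[algC]_(2 ^ n) :=
  \big[mulmx/1%:M]_(i < n) op_on i (pauli1 (s i)).

Definition stab_norm (n : nat) (A : 'M[algC]_(2 ^ n)) : algC :=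
  (2 ^ n)%:R^-1 * \sum_(s : {ffun 'I_n -> 'I_4}) `|\tr (pauli_string s *m A)|.

Definition is_unitary (m : nat) (U : 'M[algC]_m) : Prop := adj U *m U = 1%:M.

Definition clifford (n : nat) (U : 'M[algC]_(2 ^ n)) : Prop :=
  is_unitary U /\ forall s : {ffun 'I_n -> 'I_4},
    exists (c : algC) (s' : {ffun 'I_n -> 'I_4}),
      adj U *m pauli_string s *m U = c *: pauli_string s'.

Definition gf2 := 'F_2.
Definition poly_of_nat (n a : nat) : {poly gf2} := \poly_(i < n) (bit i a)%:R.
Definition gmul (P p q : {poly gf2}) : {poly gf2} := (p * q) %% P.
Definition Gamma (P : {poly gf2}) (k j : nat) : gf2 := ('X ^+ k %% P)`_j.
Definition M0 (P : {poly gf2}) (n : nat) : 'M[gf2]_n :=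
  \matrix_(p, q) Gamma P (p + q) 0.
Definition rowvec (n : nat) (p : {poly gf2}) : 'rV[gf2]_n := \row_(j < n) p`_j.
Definition alpha (P : {poly gf2}) (n v : nat) (i j : 'I_n) : bool :=
  ((rowvec n (gmul P (poly_of_nat n v) 'X^i) *m M0 P n) 0 j == 1).

Definition gop (P : {poly gf2}) (n v : nat) (i : 'I_n) : 'M[algC]_(2 ^ n) :=
  ('i ^+ alpha P v i i) *:
    (op_on i sX *m \big[mulmx/1%:M]_(j < n) (op_on j sZ) ^+ alpha P v i j).

Definition mub_family (P : {poly gf2}) (n : nat) (U : 'I_(2 ^ n) -> 'M[algC]_(2 ^ n)) : Prop :=
  forall (v : 'I_(2 ^ n)) (i : 'I_n),
    clifford (U v) /\
    exists sgn : bool, adj (U v) *m op_on i sZ *m U v = (-1) ^+ sgn *: gop P v i.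

Definition ens (n : nat) (U : 'I_(2 ^ n) -> 'M[algC]_(2 ^ n)) (o : option 'I_(2 ^ n))
  : 'M[algC]_(2 ^ n) := if o is Some v then U v else 1%:M.

Definition traceless (n : nat) (O : 'M[algC]_(2 ^ n)) : 'M[algC]_(2 ^ n) :=
  O - ((2 ^ n)%:R^-1 * \tr O)%:M.

Definition Phi (n : nat) (W : 'M[algC]_(2 ^ n)) (b : 'I_(2 ^ n)) : 'M[algC]_(2 ^ n) :=
  adj W *m delta_mx b b *m W.

Definition Bnd (n : nat) (W O : 'M[algC]_(2 ^ n)) : algC :=
  \big[Num.max/0]_(b : 'I_(2 ^ n)) `|\tr (Phi W b *m traceless O)|.

Definition Btot n U (O : 'M[algC]_(2 ^ n)) : algC :=
  \sum_(o : option 'I_(2 ^ n)) Bnd (ens U o) O.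

Definition pU n U (O : 'M[algC]_(2 ^ n)) (o : option 'I_(2 ^ n)) : algC :=
  Bnd (ens U o) O / Btot U O.

Definition outcome_prob n (W rho : 'M[algC]_(2 ^ n)) (b : 'I_(2 ^ n)) : algC :=
  (W *m rho *m adj W) b b.

Definition Ohat n U (O : 'M[algC]_(2 ^ n)) (o : option 'I_(2 ^ n)) (b : 'I_(2 ^ n)) : algC :=
  \tr (traceless O *m Phi (ens U o) b) / pU U O o + (2 ^ n)%:R^-1 * \tr O.

(* expectation of a function of (U, b) under the sampling scheme
   (unitaries with p_U = 0 are never sampled) *)
Definition expect n U (O rho : 'M[algC]_(2 ^ n))
  (f : option 'I_(2 ^ n) -> 'I_(2 ^ n) -> algC) : algC :=
  \sum_(o | pU U O o != 0) \sum_(b : 'I_(2 ^ n))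
     pU U O o * outcome_prob (ens U o) rho b * f o b.

Definition variance n U (O rho : 'M[algC]_(2 ^ n)) : algC :=
  let m := expect U O rho (Ohat U O) in
  expect U O rho (fun o b => (Ohat U O o b - m) ^+ 2).

Definition is_hermitian m (A : 'M[algC]_m) : Prop := adj A = A.
Definition is_density m (rho : 'M[algC]_m) : Prop :=
  [/\ is_hermitian rho, forall v : 'cV[algC]_m, 0 <= (adj v *m rho *m v) 0 0
    & \tr rho = 1].

(* Main.v *)
Require Import Defs.
From HB Require Import structures.
From mathcomp Require Import all_boot all_order all_algebra all_field.
From mathcomp Require Import ring.
Import Order.TTheory GRing.Theory Num.Theory.
Local Open Scope ring_scope.
Set Implicit Arguments. Unset Strict Implicit. Unset Printing Implicit Defensive.

Local Open Scope nat_scope.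
Lemma bitS j a : bit j.+1 a = bit j a./2.
Proof. by rewrite /bit expnS divnMA -divn2. Qed.
Lemma bit0 a : bit 0 a = odd a.
Proof. by rewrite /bit expn0 divn1. Qed.

Lemma bit_uniq n a b : (a < 2 ^ n)%N -> (b < 2 ^ n)%N ->
  (forall j, (j < n)%N -> bit j a = bit j b) -> a = b.
Proof.
elim: n a b => [|n IH] a b.
  by rewrite expn0 !ltnS !leqn0 => /eqP -> /eqP ->.
move=> Ha Hb H.
rewrite -[a]odd_double_half -[b]odd_double_half.
have H0 := H 0%N isT; rewrite !bit0 in H0; rewrite H0.
congr (_ + _); congr (_.*2); apply: IH.
- by rewrite -ltn_double -!muln2 -expnSr (leq_ltn_trans _ Ha) // muln2 -{2}[a]odd_double_half leq_addl.
- by rewrite -ltn_double -!muln2 -expnSr (leq_ltn_trans _ Hb) // muln2 -{2}[b]odd_double_half leq_addl.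
by move=> j Hj; rewrite -!bitS; apply: H.
Qed.

Definition nfrom (f : nat -> bool) (n : nat) : nat := \sum_(j < n) f j * 2 ^ j.

Lemma nfromS f n : nfrom f n.+1 = f 0%N + (nfrom (fun j => f j.+1) n).*2.
Proof.
rewrite /nfrom big_ord_recl /= expn0 muln1 -muln2 big_distrl /=; congr (_ + _).
by apply: eq_bigr => i _; rewrite expnS -mulnA [(2 ^ i * 2)%N]mulnC.
Qed.

Lemma nfrom_lt f n : (nfrom f n < 2 ^ n)%N.
Proof.
elim: n f => [|n IH] f; first by rewrite /nfrom big_ord0.
rewrite nfromS expnS mul2n.
have := IH (fun j => f j.+1); case: (f 0%N) => /= h.
  by rewrite -doubleS leq_double.
by rewrite add0n ltn_double.
Qed.

Lemma bit_nfrom f n j : (j < n)%N -> bit j (nfrom f n) = f j.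
Proof.
elim: n f j => [|n IH] f j //; rewrite nfromS.
case: j => [|j] Hj.
  by rewrite bit0 oddD odd_double addbF; case: (f 0%N).
rewrite bitS.
have -> : ((f 0%N) + (nfrom (fun j => f j.+1) n).*2)./2 = nfrom (fun j => f j.+1) n.
  case: (f 0%N) => /=; first by rewrite uphalf_double.
  by rewrite add0n doubleK.
by rewrite IH.
Qed.
Local Open Scope ring_scope.
Lemma gf2_cases (x : gf2) : x = 0 \/ x = 1.
Proof. case: x => [[|[|k]] Hk]; [left|right|]; try exact: val_inj. by []. Qed.
Lemma gf2_eq1 (x : gf2) : ((x == 1) : nat)%:R = x.
Proof. by case: (gf2_cases x) => ->. Qed.
Lemma addxx (x : gf2) : x + x = 0.
Proof. by case: (gf2_cases x) => ->; apply/eqP. Qed.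
Lemma gf2_bool_inj (b c : bool) : ((b : nat)%:R : gf2) = (c : nat)%:R -> b = c.
Proof. by case: b; case: c => // /eqP. Qed.
Lemma gf2_1n0 : (1 : gf2) != 0.
Proof. by apply/eqP. Qed.
Lemma addvv n (v : 'rV[gf2]_n) : v + v = 0.
Proof. by apply/rowP => j; rewrite !mxE addxx. Qed.

Definition bitv n (a : nat) : 'rV[gf2]_n := \row_j ((bit j a : nat)%:R).

Definition fromv n (r : 'rV[gf2]_n) : nat :=
  nfrom (fun j => if (insub j : option 'I_n) is Some k then r 0 k == 1 else false) n.

Lemma fromv_lt n (r : 'rV[gf2]_n) : (fromv r < 2 ^ n)%N.
Proof. exact: nfrom_lt. Qed.

Definition vidx n (r : 'rV[gf2]_n) : 'I_(2 ^ n) := Ordinal (fromv_lt r).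

Lemma bitv_vidx n (r : 'rV[gf2]_n) : bitv n (vidx r) = r.
Proof.
apply/rowP => j; rewrite mxE /= /fromv bit_nfrom //.
by rewrite valK gf2_eq1.
Qed.

Lemma bitv_inj n (a b : 'I_(2 ^ n)) : bitv n a = bitv n b -> a = b.
Proof.
move=> H; apply: val_inj; apply: (bit_uniq (n := n)) => [||j Hj]; rewrite ?ltn_ord //.
have := congr1 (fun r : 'rV[gf2]_n => r 0 (Ordinal Hj)) H; rewrite !mxE /=.
exact: gf2_bool_inj.
Qed.

Lemma bitv_eq n (a b : 'I_(2 ^ n)) : (bitv n a == bitv n b) = (a == b).
Proof. by apply/eqP/eqP => [/bitv_inj|->]. Qed.
Definition sgnF (x : gf2) : algC := if x == 0 then 1 else -1.
Lemma sgnFD x y : sgnF (x + y) = sgnF x * sgnF y.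
Proof.
by case: (gf2_cases x) => ->; case: (gf2_cases y) => ->;
  rewrite /sgnF ?addr0 ?add0r ?addxx ?eqxx ?mulr1 ?mul1r ?mulrNN ?mulr1 ?(negbTE gf2_1n0).
Qed.
Lemma sgnF0 : sgnF 0 = 1. Proof. by rewrite /sgnF eqxx. Qed.
Lemma sgnF1 : sgnF 1 = -1. Proof. by rewrite /sgnF (negbTE gf2_1n0). Qed.
Lemma norm_sgnF x : `|sgnF x| = 1.
Proof. by rewrite /sgnF; case: ifP; rewrite ?normrN normr1. Qed.

Definition dot n (u v : 'rV[gf2]_n) : gf2 := (u *m v^T) 0 0.
Lemma dotDl n (u u' v : 'rV[gf2]_n) : dot (u + u') v = dot u v + dot u' v.
Proof. by rewrite /dot mulmxDl mxE. Qed.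
Lemma dotDr n (u v v' : 'rV[gf2]_n) : dot u (v + v') = dot u v + dot u v'.
Proof. by rewrite /dot linearD /= mulmxDr mxE. Qed.
Lemma dot0l n (v : 'rV[gf2]_n) : dot 0 v = 0.
Proof. by rewrite /dot mul0mx mxE. Qed.
Lemma dot0r n (v : 'rV[gf2]_n) : dot v 0 = 0.
Proof. by rewrite /dot trmx0 mulmx0 mxE. Qed.
Lemma dot_e n (i : 'I_n) (v : 'rV[gf2]_n) : dot (delta_mx 0 i) v = v 0 i.
Proof.
rewrite /dot mxE (bigD1 i) //= big1 ?addr0 => [|j Hj]; rewrite !mxE ?eqxx ?mul1r //.
by rewrite (negbTE Hj) andbF mul0r.
Qed.

Definition W n (x w : 'rV[gf2]_n) : 'M[algC]_(2 ^ n) :=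
  \matrix_(a, b) (if bitv n a == bitv n b + x then sgnF (dot w (bitv n b)) else 0).

Lemma WM n (x w x' w' : 'rV[gf2]_n) :
  W x w *m W x' w' = sgnF (dot w x') *: W (x + x') (w + w').
Proof.
apply/matrixP => a c; rewrite !mxE.
rewrite (bigD1 (vidx (bitv n c + x'))) //= big1 => [|b Hb].
  rewrite !mxE !bitv_vidx eqxx addr0 addrA [_ + x + x']addrAC.
  case: ifP => _; rewrite ?mul0r ?mulr0 //.
  by rewrite dotDr dotDl !sgnFD mulrA [sgnF _ * sgnF (dot w x')]mulrC -!mulrA.
rewrite !mxE; case: (bitv n b =P bitv n c + x') => [E|_]; last by rewrite mulr0.
by move: Hb; rewrite -bitv_eq bitv_vidx E eqxx.
Qed.

Lemma W00 n : W 0 0 = 1%:M :> 'M[algC]_(2 ^ n).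
Proof.
apply/matrixP => a b; rewrite !mxE addr0 bitv_eq dot0l sgnF0.
by case: (a == b).
Qed.

Lemma card_rV2 n : #|{: 'rV[gf2]_n}| = (2 ^ n)%N.
Proof. by rewrite card_mx card_Fp // mul1n. Qed.

Lemma char_sum n (y : 'rV[gf2]_n) :
  \sum_(z : 'rV[gf2]_n) sgnF (dot z y) = if y == 0 then (2 ^ n)%:R else 0.
Proof.
case: eqP => [->|/eqP Hy].
  under eq_bigr do rewrite dot0r sgnF0.
  by rewrite sumr_const card_rV2.
have [j Hj] : exists j, y 0 j != 0.
  apply/existsP; apply: contraR Hy; rewrite negb_exists => /forallP H.
  by apply/eqP/rowP => j; rewrite mxE; move/negPn: (H j) => /eqP.
have Hj1 : y 0 j = 1 by case: (gf2_cases (y 0 j)) Hj => -> //; rewrite eqxx.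
set S := \sum_z _.
have HS : S = - S.
  rewrite {1}/S (reindex_inj (addIr (delta_mx 0 j))) /=.
  rewrite /S -sumrN; apply: eq_bigr => z _.
  by rewrite dotDl dot_e Hj1 sgnFD sgnF1 mulrN1.
have : S *+ 2 = 0 by rewrite mulr2n {2}HS subrr.
by move/eqP; rewrite mulrn_eq0 /= => /eqP.
Qed.
Lemma addv_eq0 n (u v : 'rV[gf2]_n) : (u + v == 0) = (u == v).
Proof.
apply/eqP/eqP => [H|->]; last exact: addvv.
by rewrite -[u]addr0 -(addvv v) addrA H add0r.
Qed.

Lemma delta_W n (b : 'I_(2 ^ n)) :
  delta_mx b b = (2 ^ n)%:R^-1 *: \sum_(z : 'rV[gf2]_n) sgnF (dot z (bitv n b)) *: W 0 z.
Proof.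
apply/matrixP => a c; rewrite !mxE summxE.
under eq_bigr do rewrite !mxE addr0 bitv_eq.
case: (a =P c) => [<-|/eqP Hac].

  under eq_bigr do rewrite -sgnFD -dotDr.
  rewrite char_sum addv_eq0 bitv_eq eq_sym andbb.
  case: (b == a); rewrite ?mulr0 // mulVf //.
  by rewrite pnatr_eq0 expn_eq0.
rewrite big1 ?mulr0; last by move=> z _; rewrite mulr0.
case: (a =P b) => [Ha|//]; case: (c =P b) => [Hc|//].
by move: Hac; rewrite Ha Hc eqxx.
Qed.
Lemma gf2_addb (q r : bool) : ((q : nat)%:R + (r : nat)%:R : gf2) = ((q (+) r) : nat)%:R.
Proof. by case: q; case: r => //=; rewrite ?addr0 ?add0r // addxx. Qed.
Lemma gf2_mulb (q r : bool) : ((q : nat)%:R * (r : nat)%:R : gf2) = ((q && r) : nat)%:R.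
Proof. by case: q; case: r => //=; rewrite ?mulr0 ?mul0r ?mulr1. Qed.

Lemma dot_eZ n (i : 'I_n) (k : gf2) (v : 'rV[gf2]_n) : dot (k *: delta_mx 0 i) v = k * v 0 i.
Proof. by rewrite /dot -scalemxAl mxE -dot_e. Qed.

Lemma cond_eq n (i : 'I_n) (a b : nat) (x : bool) :
  (bitv n a == bitv n b + ((x : nat)%:R *: delta_mx 0 i)) =
  [forall j, (j != i) ==> (bit j a == bit j b)] && (bit i a == bit i b (+) x).
Proof.
apply/eqP/andP => [H|[/forallP H1 /eqP H2]].
  split; last first.
    have := congr1 (fun r : 'rV[gf2]_n => r 0 i) H; rewrite !mxE !eqxx /= mulr1 gf2_addb.
    by move/gf2_bool_inj ->.
  apply/forallP => j; apply/implyP => Hj.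
  have := congr1 (fun r : 'rV[gf2]_n => r 0 j) H; rewrite !mxE (negbTE Hj) /= mulr0 addr0.
  by move/gf2_bool_inj ->.
apply/rowP => j; rewrite !mxE; case: (eqVneq i j) => [<-|Hj].
  by rewrite /= mulr1 gf2_addb H2.
by rewrite /= mulr0 addr0; have := H1 j; rewrite eq_sym Hj /= => /eqP ->.
Qed.

Lemma sgnF_b (q r : bool) : sgnF (((q : nat)%:R : gf2) * (r : nat)%:R) = if q && r then -1 else 1.
Proof. by case: q; case: r; rewrite /= ?mulr0 ?mul0r ?mulr1 ?sgnF0 ?sgnF1. Qed.

Lemma op_on_W n (i : 'I_n) (A : 'M[algC]_2) (c : algC) (x w : bool) :
  (forall p q : bool, A (inord p) (inord q) =
     c * (if p == q (+) x then (if w && q then -1 else 1) else 0)) ->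
  op_on i A = c *: W ((x : nat)%:R *: delta_mx 0 i) ((w : nat)%:R *: delta_mx 0 i).
Proof.
move=> HA; apply/matrixP => a b; rewrite !mxE cond_eq dot_eZ mxE sgnF_b.
case: ifP => _ /=; last by rewrite mulr0.
by rewrite /bito HA.
Qed.

Lemma inordE2 (p : bool) : val (inord p : 'I_2) = p.
Proof. by case: p; apply: inordK. Qed.
Lemma inord_eq2 (p q : bool) : ((inord p : 'I_2) == inord q) = (p == q).
Proof. by rewrite -val_eqE /= !inordE2; case: p; case: q. Qed.

Lemma opX n (i : 'I_n) : op_on i sX = W (delta_mx 0 i) 0.
Proof.
rewrite -(scale1r (W _ _)) -[delta_mx 0 i](scale1r) -(scale0r (delta_mx 0 i)).
rewrite -[1 as X in X *: delta_mx _ _]/((true : nat)%:R) -[0 as X in X *: delta_mx _ _]/((false : nat)%:R).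
apply: op_on_W => p q; rewrite !mxE inord_eq2.
by case: p; case: q; rewrite /= ?mul1r.
Qed.
Definition phased n (x w : 'rV[gf2]_n) (M : 'M[algC]_(2 ^ n)) :=
  exists c : algC, `|c| = 1 /\ M = c *: W x w.

Lemma phasedM n (x w x' w' : 'rV[gf2]_n) M M' :
  phased x w M -> phased x' w' M' -> phased (x + x') (w + w') (M *m M').
Proof.
move=> [c [Hc ->]] [c' [Hc' ->]]; exists (c * c' * sgnF (dot w x')); split.
  by rewrite !normrM Hc Hc' norm_sgnF !mulr1.
by rewrite -scalemxAl -scalemxAr WM !scalerA.
Qed.

Lemma phased1 n : phased (0 : 'rV[gf2]_n) 0 1%:M.
Proof. by exists 1; rewrite normr1 scale1r W00. Qed.

Lemma phasedZ n (x w : 'rV[gf2]_n) M d : `|d| = 1 -> phased x w M -> phased x w (d *: M).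
Proof.
move=> Hd [c [Hc ->]]; exists (d * c); rewrite normrM Hd Hc mulr1 scalerA; split=> //.
Qed.

Lemma phased_big n (I : Type) (r : seq I) (P : pred I) (X Y : I -> 'rV[gf2]_n) (F : I -> 'M[algC]_(2 ^ n)) :
  (forall i, P i -> phased (X i) (Y i) (F i)) ->
  phased (\sum_(i <- r | P i) X i) (\sum_(i <- r | P i) Y i) (\big[mulmx/1%:M]_(i <- r | P i) F i).
Proof.
move=> H; apply: (big_rec3 (fun x w M => phased x w M)); first exact: phased1.
by move=> i y1 y2 y3 Pi Hy; apply: phasedM => //; apply: H.
Qed.

Lemma phased_tr n (x w : 'rV[gf2]_n) M (A : 'M[algC]_(2 ^ n)) :
  phased x w M -> `|\tr (M *m A)| = `|\tr (W x w *m A)|.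
Proof. by move=> [c [Hc ->]]; rewrite -scalemxAl mxtraceZ normrM Hc mul1r. Qed.

Definition xk (k : 'I_4) : bool := (val k == 1%N) || (val k == 2%N).
Definition wk (k : 'I_4) : bool := (val k == 2%N) || (val k == 3%N).

Lemma pauli1_W (k : 'I_4) : exists c : algC, `|c| = 1 /\ forall p q : bool,
  pauli1 k (inord p) (inord q) = c * (if p == q (+) xk k then (if wk k && q then -1 else 1) else 0).
Proof.
case: k => [[|[|[|[|k]]]] Hk] //; rewrite /pauli1 /xk /wk /=.
- exists 1; split; first exact: normr1.
  by move=> p q; rewrite !mxE inord_eq2 mul1r addbF; case: (p == q).
- exists 1; split; first exact: normr1.
  by move=> p q; rewrite !mxE inord_eq2 mul1r; case: p; case: q.
- exists 'i; split; first exact: normCi.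
  move=> p q; rewrite !mxE inord_eq2 inordE2.
  by case: p; case: q; rewrite /= ?mulr0 ?mulr1 ?mulrN1.
- exists 1; split; first exact: normr1.
  move=> p q; rewrite !mxE inord_eq2 inordE2 mul1r addbF.
  by case: p; case: q.
Qed.

Lemma op_on_phased n (i : 'I_n) (k : 'I_4) :
  phased ((xk k : nat)%:R *: delta_mx 0 i) ((wk k : nat)%:R *: delta_mx 0 i) (op_on i (pauli1 k)).
Proof.
have [c [Hc H]] := pauli1_W k; exists c; split=> //.
exact: op_on_W.
Qed.

Definition xs n (s : {ffun 'I_n -> 'I_4}) : 'rV[gf2]_n := \row_i ((xk (s i) : nat)%:R).
Definition ws n (s : {ffun 'I_n -> 'I_4}) : 'rV[gf2]_n := \row_i ((wk (s i) : nat)%:R).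

Lemma pauli_string_phased n (s : {ffun 'I_n -> 'I_4}) :
  phased (xs s) (ws s) (pauli_string s).
Proof.
rewrite [xs s]row_sum_delta [ws s]row_sum_delta /pauli_string.
under eq_bigr do rewrite mxE.
under [X in phased _ X _]eq_bigr do rewrite mxE.
exact: phased_big (fun i _ => op_on_phased i (s i)).
Qed.
Lemma opZ n (i : 'I_n) : op_on i sZ = W 0 (delta_mx 0 i).
Proof.
rewrite -(scale1r (W _ _)) -[delta_mx 0 i](scale1r) -(scale0r (delta_mx 0 i)).
rewrite -[1 as X in X *: delta_mx _ _]/((true : nat)%:R) -[0 as X in X *: delta_mx _ _]/((false : nat)%:R).
apply: op_on_W => p q; rewrite !mxE inord_eq2 inordE2 mul1r addbF.
by case: p; case: q.
Qed.

Definition Amat (P : {poly gf2}) n (v : nat) : 'M[gf2]_n := \matrix_(i, j) ((alpha P v i j : nat)%:R).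

Lemma sum_e_row n (X : 'I_n -> gf2) : \sum_(j < n) X j *: delta_mx 0 j = \row_j X j.
Proof. by rewrite [RHS]row_sum_delta; apply: eq_bigr => j _; rewrite mxE. Qed.

Lemma phased_pick n (b : bool) (x w : 'rV[gf2]_n) M :
  phased x w M -> phased ((b : nat)%:R *: x) ((b : nat)%:R *: w) (if b then M else 1%:M).
Proof. by case: b => H; rewrite /= ?scale1r ?scale0r //; exact: phased1. Qed.

Lemma gop_phased (P : {poly gf2}) n v (i : 'I_n) :
  phased (delta_mx 0 i) (row i (Amat P n v)) (gop P v i).
Proof.
rewrite /gop; apply: phasedZ; first by rewrite normrX normCi expr1n.
rewrite -[delta_mx 0 i]addr0 -[row i _]add0r; apply: phasedM.
  by rewrite opX; exists 1; rewrite normr1 scale1r.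
have -> : row i (Amat P n v) = \sum_(j < n) (alpha P v i j : nat)%:R *: delta_mx 0 j.
  by rewrite sum_e_row; apply/rowP => j; rewrite !mxE.
have Hb : phased (\sum_(j < n) (alpha P v i j : nat)%:R *: (0 : 'rV[gf2]_n))
   (\sum_(j < n) (alpha P v i j : nat)%:R *: delta_mx 0 j)
   (\big[mulmx/1%:M]_(j < n) op_on j sZ ^+ alpha P v i j).
  apply: phased_big => j _.
  have -> : op_on j sZ ^+ alpha P v i j = if alpha P v i j then op_on j sZ else 1%:M.
    by case: (alpha P v i j); rewrite ?expr1 ?expr0.
  by apply: phased_pick; rewrite opZ; exists 1; rewrite normr1 scale1r.
by rewrite big1 in Hb => // j _; rewrite scaler0.
Qed.
Lemma conj_big n (U : 'M[algC]_(2 ^ n)) (HU : adj U *m U = 1%:M) (F : 'I_n -> 'M[algC]_(2 ^ n)) :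
  adj U *m (\big[mulmx/1%:M]_(i < n) F i) *m U = \big[mulmx/1%:M]_(i < n) (adj U *m F i *m U).
Proof.
have HU' := mulmx1C HU.
apply: (big_morph (fun M => adj U *m M *m U)).
  move=> A B /=.
  by rewrite -!mulmxA [U *m (adj U *m _)]mulmxA HU' mul1mx !mulmxA.
by rewrite mulmx1.
Qed.

Lemma phased_sum_pick n (z : 'rV[gf2]_n) (X : 'I_n -> 'rV[gf2]_n) :
  \sum_(i < n) ((z 0 i == 1) : nat)%:R *: X i = z *m \matrix_(i, j) X i 0 j.
Proof.
rewrite mulmx_sum_row; apply: eq_bigr => i _; rewrite gf2_eq1; congr (_ *: _).
by apply/rowP => j; rewrite !mxE.
Qed.

Lemma conjW0 (P : {poly gf2}) n (U : 'I_(2 ^ n) -> 'M[algC]_(2 ^ n)) (HU : mub_family P U)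
  (v : 'I_(2 ^ n)) (HUv : adj (U v) *m U v = 1%:M) (z : 'rV[gf2]_n) :
  phased z (z *m Amat P n v) (adj (U v) *m W 0 z *m U v).
Proof.
set Zp := \big[mulmx/1%:M]_(i < n) (if z 0 i == 1 then op_on i sZ else 1%:M).
have HZ : phased 0 z Zp.
  have Hb : phased (\sum_(i < n) ((z 0 i == 1) : nat)%:R *: (0 : 'rV[gf2]_n))
     (\sum_(i < n) ((z 0 i == 1) : nat)%:R *: delta_mx 0 i) Zp.
    apply: phased_big => i _; apply: phased_pick; rewrite opZ.
    by exists 1; rewrite normr1 scale1r.
  rewrite big1 in Hb; last by move=> i _; rewrite scaler0.
  suff <- : \sum_(i < n) ((z 0 i == 1) : nat)%:R *: delta_mx 0 i = z by [].
  by rewrite sum_e_row; apply/rowP => j; rewrite !mxE gf2_eq1.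
have [c [Hc HcZ]] := HZ.
have Hc0 : c != 0 by rewrite -normr_eq0 Hc oner_neq0.
have -> : W 0 z = c^-1 *: Zp by rewrite HcZ scalerA mulVf // scale1r.
rewrite -scalemxAr -scalemxAl; apply: phasedZ; first by rewrite normrV ?Hc ?invr1 // unitfE.
rewrite conj_big //.
have Hb : phased (\sum_(i < n) ((z 0 i == 1) : nat)%:R *: delta_mx 0 i)
   (\sum_(i < n) ((z 0 i == 1) : nat)%:R *: row i (Amat P n v))
   (\big[mulmx/1%:M]_(i < n) (adj (U v) *m (if z 0 i == 1 then op_on i sZ else 1%:M) *m U v)).
  apply: phased_big => i _.
  have -> : adj (U v) *m (if z 0 i == 1 then op_on i sZ else 1%:M) *m U v =
            if z 0 i == 1 then adj (U v) *m op_on i sZ *m U v else 1%:M.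
    by case: (z 0 i == 1); rewrite // mulmx1.
  apply: phased_pick.
  have [_ [sg ->]] := HU v i.
  by apply: phasedZ; [rewrite normrX normrN normr1 expr1n | apply: gop_phased].
have E1 : \sum_(i < n) ((z 0 i == 1) : nat)%:R *: delta_mx 0 i = z.
  by rewrite sum_e_row; apply/rowP => j; rewrite !mxE gf2_eq1.
have E2 : \matrix_(i, j) row i (Amat P n v) 0 j = Amat P n v.
  by apply/matrixP => i j; rewrite !mxE.
by rewrite E1 phased_sum_pick E2 in Hb.
Qed.
Definition Lf (P q : {poly gf2}) : gf2 := (q %% P)`_0.

Lemma LfD P p q : Lf P (p + q) = Lf P p + Lf P q.
Proof. by rewrite /Lf modpD coefD. Qed.
Lemma LfZ P c q : Lf P (c *: q) = c * Lf P q.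
Proof. by rewrite /Lf modpZl coefZ. Qed.
Lemma Lf_sum P (I : Type) (r : seq I) (F : I -> {poly gf2}) :
  Lf P (\sum_(i <- r) F i) = \sum_(i <- r) Lf P (F i).
Proof.
elim: r => [|a r IH]; first by rewrite !big_nil /Lf mod0p coef0.
by rewrite !big_cons LfD IH.
Qed.
Lemma Lf_modl P p q : Lf P ((p %% P) * q) = Lf P (p * q).
Proof. by rewrite /Lf mulrC modp_mul mulrC. Qed.

Lemma poly_small n (q : {poly gf2}) : (size q <= n)%N -> q = \sum_(p < n) q`_p *: 'X^p.
Proof.
move=> Hq; rewrite -poly_def; apply/polyP => k; rewrite coef_poly.
by case: ltnP => // Hk; rewrite nth_default // (leq_trans Hq Hk).
Qed.

Lemma rowM0 P n (q : {poly gf2}) (j : 'I_n) : (size q <= n)%N ->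
  (rowvec n q *m M0 P n) 0 j = Lf P (q * 'X^j).
Proof.
move=> Hq; rewrite {2}(poly_small Hq) mulr_suml Lf_sum mxE.
apply: eq_bigr => p _; rewrite !mxE -scalerAl LfZ -exprD /Gamma /Lf.
by [].
Qed.
Lemma Amat_entry (P : {poly gf2}) n (v : nat) (i j : 'I_n) : size P = n.+1 ->
  Amat P n v i j = Lf P (poly_of_nat n v * 'X^i * 'X^j).
Proof.
move=> Pdeg; rewrite mxE /alpha gf2_eq1 rowM0 /gmul ?Lf_modl //.
have HP : P != 0 by rewrite -size_poly_eq0 Pdeg.
by rewrite -ltnS -Pdeg ltn_modp.
Qed.

Definition qz n (z : 'rV[gf2]_n) : {poly gf2} := \poly_(i < n) (if insub i is Some k then z 0 k else 0).

Lemma zA_entry (P : {poly gf2}) n (v : nat) (z : 'rV[gf2]_n) (j : 'I_n) : size P = n.+1 ->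
  (z *m Amat P n v) 0 j = Lf P (poly_of_nat n v * qz z * 'X^j).
Proof.
move=> Pdeg; rewrite mxE /qz poly_def mulr_sumr mulr_suml Lf_sum.
apply: eq_bigr => i _; rewrite Amat_entry // -scalerAr -scalerAl LfZ valK.
by [].
Qed.

Lemma Lf_dvd (P : {poly gf2}) n (r : {poly gf2}) : irreducible_poly P -> size P = n.+1 ->
  (forall j : 'I_n, Lf P (r * 'X^j) = 0) -> P %| r.
Proof.
move=> Pirr Pdeg H.
have HP : P != 0 by rewrite -size_poly_eq0 Pdeg.
have n1 : (0 < n)%N by case: Pirr; rewrite Pdeg.
rewrite /dvdp; apply: contraT => Hr.
have Hcop : coprimep P (r %% P).
  rewrite irreducible_poly_coprime //; apply/negP => Hd.
  have := dvdp_leq Hr Hd; rewrite leqNgt ltn_modp HP //.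
have [[u1 u2] /= Hu] := Bezout_eq1_coprimepP _ _ Hcop.
have E1 : Lf P ((r %% P) * u2) = 1.
  have -> : (r %% P) * u2 = 1 - u1 * P by rewrite -Hu [u1 * P + _]addrC addrK mulrC.
  by rewrite /Lf modpD modNp modp_mull subr0 modp_small ?coef1 // size_poly1 Pdeg ltnS.
have Hs : (size (u2 %% P)%R <= n)%N by rewrite -ltnS -Pdeg ltn_modp.
have E2 : Lf P ((r %% P) * u2) = 0.
  rewrite -[LHS]/(((r %% P) * u2) %% P)`_0 -modp_mul -/(Lf P _) (poly_small Hs).
  rewrite mulr_sumr Lf_sum big1 // => j _.
  by rewrite -scalerAr LfZ Lf_modl H mulr0.
by move: (gf2_1n0); rewrite -E1 E2 eqxx.
Qed.
Lemma LfN P q : Lf P (- q) = - Lf P q.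
Proof. by rewrite /Lf modNp coefN. Qed.

Lemma Amat_inj (P : {poly gf2}) n (Pirr : irreducible_poly P) (Pdeg : size P = n.+1)
  (v v' : 'I_(2 ^ n)) (z : 'rV[gf2]_n) :
  z != 0 -> z *m Amat P n v = z *m Amat P n v' -> v = v'.
Proof.
move=> Hz Heq.
have HP : P != 0 by rewrite -size_poly_eq0 Pdeg.
set pv := poly_of_nat n v; set pv' := poly_of_nat n v'.
have H : forall j : 'I_n, Lf P ((pv - pv') * qz z * 'X^j) = 0.
  move=> j; have := congr1 (fun r : 'rV[gf2]_n => r 0 j) Heq; rewrite /= !zA_entry //.
  by rewrite mulrBl mulrBl LfD LfN => ->; rewrite subrr.
have Hd := Lf_dvd Pirr Pdeg H.
have Hq0 : qz z != 0.
  apply: contraNneq Hz => Hq; apply/eqP/rowP => k.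
  have := congr1 (fun p : {poly gf2} => p`_k) Hq; rewrite /qz coef_poly ltn_ord valK coef0.
  by rewrite mxE.
have Hcop : coprimep P (qz z).
  rewrite irreducible_poly_coprime //; apply/negP => Hd'.
  have := dvdp_leq Hq0 Hd'; rewrite Pdeg ltnNge.
  by rewrite (size_poly _ _).
rewrite Gauss_dvdpl // in Hd.
have Hsz : (size (pv - pv')%R <= n)%N.
  by rewrite (leq_trans (size_add _ _)) // size_opp geq_max !size_poly.
have E : pv - pv' = 0.
  apply/eqP; apply: contraT => Hne.
  by have := dvdp_leq Hne Hd; rewrite Pdeg ltnNge Hsz.
have {}E : pv = pv' by apply/eqP; rewrite -subr_eq0 E.
apply: val_inj; apply: (bit_uniq (n := n)) => [||j Hj]; rewrite ?ltn_ord //.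
have := congr1 (fun p : {poly gf2} => p`_j) E; rewrite /pv /pv' /poly_of_nat !coef_poly Hj.
exact: gf2_bool_inj.
Qed.
Lemma sum_option (T : finType) (F : option T -> algC) :
  \sum_(o : option T) F o = F None + \sum_(v : T) F (Some v).
Proof.
rewrite (bigD1 None) //=; congr (_ + _).
rewrite (reindex_omap Some id) /=; last by case.
by apply: eq_bigl => v; rewrite eqxx.
Qed.

Lemma tr_traceless n (O : 'M[algC]_(2 ^ n)) : \tr (traceless O) = 0.
Proof.
rewrite /traceless linearB /= mxtrace_scalar -[((2 ^ n)%:R^-1 * \tr O) *+ 2 ^ n]mulr_natl mulrA mulfV ?mul1r ?subrr //.
by rewrite pnatr_eq0 expn_eq0.
Qed.

Lemma tr_Phi_bound n (Wm : 'M[algC]_(2 ^ n)) (HW : adj Wm *m Wm = 1%:M) (T : 'M[algC]_(2 ^ n))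
  (HT : \tr T = 0) (b : 'I_(2 ^ n)) :
  `|\tr (Phi Wm b *m T)| <=
    (2 ^ n)%:R^-1 * \sum_(z : 'rV[gf2]_n | z != 0) `|\tr (adj Wm *m W 0 z *m Wm *m T)|.
Proof.
rewrite /Phi delta_W -scalemxAr -scalemxAl -scalemxAl mxtraceZ.
rewrite mulmx_sumr mulmx_suml mulmx_suml raddf_sum /=.
rewrite (bigD1 0) //= W00 -scalemxAr -scalemxAl -scalemxAl mxtraceZ mulmx1 HW mul1mx HT mulr0 add0r.
rewrite normrM ger0_norm ?invr_ge0 ?ler0n //; apply: ler_wpM2l; first by rewrite invr_ge0 ler0n.
apply: le_trans (ler_norm_sum _ _ _) _; apply: ler_sum => z _.
by rewrite -scalemxAr -scalemxAl -scalemxAl mxtraceZ normrM norm_sgnF mul1r.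
Qed.
Lemma max_nneg (x y : algC) : 0 <= x -> 0 <= y -> 0 <= Num.max x y.
Proof. by move=> Hx Hy; rewrite maxElt; case: ifP. Qed.
Lemma le_maxl_nneg (x y : algC) : 0 <= x -> 0 <= y -> x <= Num.max x y.
Proof. by move=> Hx Hy; rewrite maxElt; case: ifP => // /ltW. Qed.
Lemma le_maxr_nneg (x y : algC) : 0 <= x -> 0 <= y -> y <= Num.max x y.
Proof.
move=> Hx Hy; rewrite maxElt; case: ifP => // H.
by rewrite real_leNgt ?H // ger0_real.
Qed.

Lemma bigmax_nneg (I : Type) (r : seq I) (F : I -> algC) :
  (forall i, 0 <= F i) -> 0 <= \big[Num.max/0]_(i <- r) F i.
Proof.
move=> H; elim: r => [|a r IH]; first by rewrite big_nil.
by rewrite big_cons max_nneg.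
Qed.

Lemma le_bigmax_nneg (I : eqType) (r : seq I) (F : I -> algC) (b : I) :
  (forall i, 0 <= F i) -> b \in r -> F b <= \big[Num.max/0]_(i <- r) F i.
Proof.
move=> H; elim: r => [|a r IH] //; rewrite inE big_cons => /orP [/eqP ->|Hb].
  by apply: le_maxl_nneg => //; apply: bigmax_nneg.
apply: le_trans (IH Hb) _; apply: le_maxr_nneg => //; by apply: bigmax_nneg.
Qed.

Lemma Bnd_ge0 n (Wm O : 'M[algC]_(2 ^ n)) : 0 <= Bnd Wm O.
Proof. by apply: bigmax_nneg. Qed.

Lemma le_Bnd n (Wm O : 'M[algC]_(2 ^ n)) b : `|\tr (Phi Wm b *m traceless O)| <= Bnd Wm O.
Proof.
by rewrite /Bnd; apply: (le_bigmax_nneg (F := fun b => `|\tr (Phi Wm b *m traceless O)|)) => //; rewrite mem_index_enum.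
Qed.

Lemma Bnd_le n (Wm O : 'M[algC]_(2 ^ n)) (HW : adj Wm *m Wm = 1%:M) :
  Bnd Wm O <= (2 ^ n)%:R^-1 *
    \sum_(z : 'rV[gf2]_n | z != 0) `|\tr (adj Wm *m W 0 z *m Wm *m traceless O)|.
Proof.
apply: bigmax_le => [|b _]; last by apply: tr_Phi_bound => //; apply: tr_traceless.
by rewrite mulr_ge0 ?invr_ge0 ?ler0n // sumr_ge0.
Qed.
Definition code4 (a b : gf2) : 'I_4 :=
  inord (if a == 1 then (if b == 1 then 2 else 1) else (if b == 1 then 3 else 0)).

Definition hxw n (s : {ffun 'I_n -> 'I_4}) : 'rV[gf2]_n * 'rV[gf2]_n := (xs s, ws s).
Definition gxw n (p : 'rV[gf2]_n * 'rV[gf2]_n) : {ffun 'I_n -> 'I_4} :=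
  [ffun i => code4 (p.1 0 i) (p.2 0 i)].

Lemma hxwK n : cancel (@hxw n) (@gxw n).
Proof.
move=> s; apply/ffunP => i; rewrite ffunE /= !mxE.
case: (s i) => [[|[|[|[|k]]]] Hk] //; rewrite /code4 /xk /wk /=; apply: val_inj;
  rewrite /= ?(negbTE gf2_1n0) ?eqxx /= inordK //.
Qed.

Lemma gxwK n : cancel (@gxw n) (@hxw n).
Proof.
move=> [x w]; rewrite /hxw /gxw /=; congr (_, _); apply/rowP => i; rewrite !mxE ffunE /=;
  case: (gf2_cases (x 0 i)) => ->; case: (gf2_cases (w 0 i)) => ->;
  rewrite /code4 /xk /wk ?(negbTE gf2_1n0) ?eqxx /= inordK //.
Qed.

Lemma sum_pauli n (F : 'rV[gf2]_n -> 'rV[gf2]_n -> algC) :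
  \sum_(s : {ffun 'I_n -> 'I_4}) F (xs s) (ws s) = \sum_(x : 'rV[gf2]_n) \sum_(w : 'rV[gf2]_n) F x w.
Proof.
rewrite pair_big (reindex (@hxw n)) //=.
by exists (@gxw n) => p _; [apply: hxwK | apply: gxwK].
Qed.
Lemma adj1 m : adj (1%:M : 'M[algC]_m) = 1%:M.
Proof.
apply/matrixP => i j; rewrite !mxE eq_sym.
by case: (i == j); rewrite /= ?conjC1 ?conjC0.
Qed.

Lemma sum_sub_le (T : finType) (S : {set T}) (f : T -> algC) :
  (forall w, 0 <= f w) -> \sum_(w in S) f w <= \sum_w f w.
Proof.
move=> H; rewrite [X in _ <= X](bigID (fun w => w \in S)) /= lerDl.
by apply: sumr_ge0.
Qed.

Lemma part2 n (P : {poly gf2})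
  (Pirr : irreducible_poly P) (Pdeg : size P = n.+1)
  (U : 'I_(2 ^ n) -> 'M[algC]_(2 ^ n)) (HU : mub_family P U)
  (HUu : forall v, adj (U v) *m U v = 1%:M)
  (O : 'M[algC]_(2 ^ n)) :
  Btot U O <= stab_norm (traceless O).
Proof.
set T := traceless O.
have key1 : Bnd (1%:M) O <= (2 ^ n)%:R^-1 * \sum_(z : 'rV[gf2]_n | z != 0) `|\tr (W 0 z *m T)|.
  have HW1 : adj (1%:M : 'M[algC]_(2 ^ n)) *m 1%:M = 1%:M by rewrite adj1 mulmx1.
  apply: le_trans (Bnd_le O HW1) _; rewrite adj1 le_eqVlt; apply/orP; left; apply/eqP.
  by congr (_ * _); apply: eq_bigr => z _; rewrite mul1mx mulmx1.
have key2 : forall v, Bnd (U v) O <=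
    (2 ^ n)%:R^-1 * \sum_(z : 'rV[gf2]_n | z != 0) `|\tr (W z (z *m Amat P n v) *m T)|.
  move=> v; apply: le_trans (Bnd_le O (HUu v)) _.
  by under eq_bigr do rewrite (phased_tr _ (conjW0 HU (HUu v) _)).
rewrite /Btot sum_option /= /stab_norm.
under [X in _ <= _ * X]eq_bigr do rewrite (phased_tr _ (pauli_string_phased _)).
rewrite (sum_pauli (fun x w => `|\tr (W x w *m T)|)).
have key3 := lerD key1 (ler_sum (index_enum _) (P := xpredT) (fun v _ => key2 v)).
apply: le_trans key3 _.
rewrite -mulr_sumr -mulrDr; apply: ler_wpM2l; first by rewrite invr_ge0 ler0n.
rewrite [X in _ <= X](bigD1 0) //=; apply: lerD.
  by rewrite [X in _ <= X](bigD1 0) //= lerDr.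
rewrite exchange_big /=; apply: ler_sum => x Hx.
rewrite [X in X <= _](eq_bigl (fun v => v \in [set: 'I_(2 ^ n)])); last by move=> v; rewrite in_setT.
rewrite -(big_imset (fun w => `|\tr (W x w *m T)|) (h := fun v : 'I_(2 ^ n) => x *m Amat P n v)) /=.
  by apply: sum_sub_le => w; apply: normr_ge0.
by move=> v v' _ _; apply: Amat_inj.
Qed.
Lemma adjM m k l (A : 'M[algC]_(m, k)) (B : 'M[algC]_(k, l)) : adj (A *m B) = adj B *m adj A.
Proof. by rewrite /adj (map_mxM Num.conj_op) trmx_mul. Qed.

Lemma adjK m k (A : 'M[algC]_(m, k)) : adj (adj A) = A.
Proof. by apply/matrixP => i j; rewrite !mxE conjCK. Qed.

Lemma adj_delta m k (i : 'I_m) (j : 'I_k) : adj (delta_mx i j : 'M[algC]_(m, k)) = delta_mx j i.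
Proof.
apply/matrixP => a b; rewrite !mxE.
by case: (b == i); case: (a == j); rewrite /= ?conjC1 ?conjC0.
Qed.

Lemma entry_delta n (M : 'M[algC]_n) (b : 'I_n) :
  ((delta_mx (0 : 'I_1) b : 'M[algC]_(1, n)) *m M *m (delta_mx b (0 : 'I_1) : 'M[algC]_(n, 1))) 0 0 = M b b.
Proof. by rewrite -rowE -colE !mxE. Qed.

Lemma tr_delta n (M : 'M[algC]_n) (b : 'I_n) : \tr (M *m delta_mx b b) = M b b.
Proof.
have -> : delta_mx b b = (delta_mx b (0 : 'I_1) : 'M[algC]_(n, 1)) *m (delta_mx (0 : 'I_1) b : 'M[algC]_(1, n)).
  by rewrite mul_delta_mx.
rewrite mulmxA mxtrace_mulC mulmxA.
by rewrite /mxtrace big_ord1 entry_delta.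
Qed.

Lemma herm_diag_real n (M : 'M[algC]_n) (b : 'I_n) : adj M = M -> M b b \is Num.real.
Proof.
move=> H; apply/CrealP.
have := congr1 (fun A : 'M[algC]_n => A b b) H; by rewrite /= !mxE.
Qed.

Lemma unitary_r n (Wm : 'M[algC]_n) : adj Wm *m Wm = 1%:M -> Wm *m adj Wm = 1%:M.
Proof. exact: mulmx1C. Qed.

Lemma tr_herm_Phi n (H Wm : 'M[algC]_(2 ^ n)) (b : 'I_(2 ^ n)) :
  adj H = H -> \tr (H *m Phi Wm b) \is Num.real.
Proof.
move=> HH; rewrite /Phi !mulmxA mxtrace_mulC !mulmxA tr_delta.
apply: herm_diag_real; by rewrite !adjM adjK HH mulmxA.
Qed.

Lemma outcome_ge0 n (Wm rho : 'M[algC]_(2 ^ n)) (b : 'I_(2 ^ n)) :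
  (forall v : 'cV[algC]_(2 ^ n), 0 <= (adj v *m rho *m v) 0 0) -> 0 <= outcome_prob Wm rho b.
Proof.
move=> H; have := H (adj Wm *m delta_mx b 0).
by rewrite adjM adjK adj_delta !mulmxA -[delta_mx 0 b *m Wm *m rho *m adj Wm]mulmxA
   -[delta_mx 0 b *m Wm *m (rho *m adj Wm)]mulmxA entry_delta mulmxA.
Qed.

Lemma outcome_sum n (Wm rho : 'M[algC]_(2 ^ n)) : adj Wm *m Wm = 1%:M -> \tr rho = 1 ->
  \sum_b outcome_prob Wm rho b = 1.
Proof.
move=> HW Hr; rewrite -[RHS]Hr.
rewrite -[LHS]/(\tr (Wm *m rho *m adj Wm)) mxtrace_mulC mulmxA HW mul1mx //.
Qed.
Definition Ew (I J : finType) (S : pred I) (w : I -> J -> algC) (h : I -> J -> algC) : algC :=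
  \sum_(o | S o) \sum_b w o b * h o b.

Lemma Ew_ext (I J : finType) S w (h1 h2 : I -> J -> algC) :
  (forall o b, h1 o b = h2 o b) -> Ew S w h1 = Ew S w h2.
Proof. by move=> H; apply: eq_bigr => o _; apply: eq_bigr => b _; rewrite H. Qed.
Lemma Ew_sub (I J : finType) S w (h1 h2 : I -> J -> algC) :
  Ew S w (fun o b => h1 o b - h2 o b) = Ew S w h1 - Ew S w h2.
Proof.
rewrite /Ew -sumrB; apply: eq_bigr => o _; rewrite -sumrB.
by apply: eq_bigr => b _; rewrite mulrBr.
Qed.
Lemma Ew_scal (I J : finType) S w k (h : I -> J -> algC) :
  Ew S w (fun o b => k * h o b) = k * Ew S w h.
Proof.
rewrite /Ew mulr_sumr; apply: eq_bigr => o _; rewrite mulr_sumr.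
by apply: eq_bigr => b _; rewrite mulrCA.
Qed.
Lemma Ew_const (I J : finType) S (w : I -> J -> algC) k :
  \sum_(o | S o) \sum_b w o b = 1 -> Ew S w (fun _ _ => k) = k.
Proof.
move=> H; rewrite -[RHS]mulr1 -H mulr_sumr; apply: eq_bigr => o _; rewrite mulr_sumr.
by apply: eq_bigr => b _; rewrite mulrC.
Qed.

Lemma var_gen (I J : finType) (S : pred I) (w f : I -> J -> algC) (c0 : algC) :
  (forall o b, w o b \is Num.real) -> (forall o b, f o b \is Num.real) -> c0 \is Num.real ->
  \sum_(o | S o) \sum_b w o b = 1 ->
  Ew S w (fun o b => (f o b - Ew S w f) ^+ 2) <= Ew S w (fun o b => (f o b - c0) ^+ 2).
Proof.
move=> Hw Hf Hc H1; set m := Ew S w f.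
have Hm : m \is Num.real by apply: rpred_sum => o _; apply: rpred_sum => b _; apply: rpredM.
have E : Ew S w (fun o b => (f o b - c0) ^+ 2) - Ew S w (fun o b => (f o b - m) ^+ 2) = (m - c0) ^+ 2.
  rewrite -Ew_sub.
  rewrite (@Ew_ext _ _ S w _ (fun o b => (m - c0) * (2%:R * f o b - (m + c0)))); last first.
    by move=> o b; ring.
  rewrite Ew_scal Ew_sub Ew_scal Ew_const // -/m; ring.
rewrite -subr_ge0 E -realEsqr; exact: rpredB.
Qed.
Lemma adj_traceless n (O : 'M[algC]_(2 ^ n)) : adj O = O -> adj (traceless O) = traceless O.
Proof.
move=> HO; have Hr : \tr O \is Num.real.
  by apply: rpred_sum => i _; apply: herm_diag_real.
apply/matrixP => i j; have := congr1 (fun A : 'M[algC]_(2 ^ n) => A i j) HO.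
rewrite /traceless !mxE /= => <-.
by rewrite rmorphB /= rmorphMn /= rmorphM /= (conj_Creal Hr) fmorphV /= conjC_nat eq_sym.
Qed.

Lemma Btot_ge0 n U (O : 'M[algC]_(2 ^ n)) : 0 <= Btot U O.
Proof. by apply: sumr_ge0 => o _; apply: Bnd_ge0. Qed.

Lemma sq_div_le (t B p : algC) : t \is Num.real -> `|t| <= B -> 0 <= p ->
  (t / p) ^+ 2 <= (B / p) ^+ 2.
Proof.
move=> Ht HtB Hp; rewrite !expr_div_n; apply: ler_wpM2r; first by rewrite invr_ge0 exprn_ge0.
rewrite -real_normK // ler_pXn2r // nnegrE ?normr_ge0 //.
exact: le_trans HtB.
Qed.

Lemma part1 n (U : 'I_(2 ^ n) -> 'M[algC]_(2 ^ n))
  (HUu : forall v, adj (U v) *m U v = 1%:M)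
  (O : 'M[algC]_(2 ^ n)) (HO : is_hermitian O)
  (rho : 'M[algC]_(2 ^ n)) (Hrho : is_density rho) :
  variance U O rho <= Btot U O ^+ 2.
Proof.
have HUo : forall o, adj (ens U o) *m ens U o = 1%:M.
  by case=> [v|] //=; rewrite adj1 mulmx1.
case: Hrho => _ Hpos Htr.
case: (Btot U O =P 0) => HB.
  rewrite /variance /expect big1 ?HB ?expr0n ?lexx // => o.
  by rewrite {1}/pU HB invr0 mulr0 eqxx.
have HBp : 0 < Btot U O by rewrite lt_def Btot_ge0 andbT; apply/eqP.
set S := fun o => pU U O o != 0.
set w := fun o b => pU U O o * outcome_prob (ens U o) rho b.
set c0 := (2 ^ n)%:R^-1 * \tr O.
have HpU0 : forall o, 0 <= pU U O o.
  by move=> o; rewrite /pU divr_ge0 ?Bnd_ge0 ?Btot_ge0.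
have Hq0 : forall o b, 0 <= outcome_prob (ens U o) rho b.
  by move=> o b; apply: outcome_ge0.
have Hw : forall o b, w o b \is Num.real.
  by move=> o b; apply: ger0_real; rewrite mulr_ge0.
have Hc0 : c0 \is Num.real.
  apply: rpredM; first by rewrite ger0_real // invr_ge0 ler0n.
  by apply: rpred_sum => i _; apply: herm_diag_real.
have HT := adj_traceless HO.
have Ht : forall o b, \tr (traceless O *m Phi (ens U o) b) \is Num.real.
  by move=> o b; apply: tr_herm_Phi.
have Hf : forall o b, Ohat U O o b \is Num.real.
  move=> o b; rewrite /Ohat; apply: rpredD => //; apply: rpredM => //.
  by rewrite realV ger0_real.
have Hsum : \sum_(o | S o) \sum_b w o b = 1.
  have -> : \sum_(o | S o) \sum_b w o b = \sum_(o | S o) pU U O o.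
    apply: eq_bigr => o _; rewrite /w -mulr_sumr outcome_sum ?mulr1 //.
  rewrite [RHS](_ : 1 = \sum_o pU U O o); last first.
    by rewrite /pU -mulr_suml mulfV //; apply/eqP.
  rewrite [RHS](bigID S) /= [X in _ = _ + X]big1 ?addr0 // => o.
  by rewrite /S negbK => /eqP.
have := var_gen Hw Hf Hc0 Hsum.
rewrite -[Ew S w _]/(variance U O rho) => H; apply: le_trans H _.
rewrite /Ew.
apply: le_trans (_ : \sum_(o | S o) Bnd (ens U o) O * Btot U O <= _); last first.
  rewrite -mulr_suml expr2; apply: ler_wpM2r; first exact: Btot_ge0.
  rewrite /Btot [X in _ <= X](bigID S) /= lerDl.
  by apply: sumr_ge0 => o _; apply: Bnd_ge0.
apply: ler_sum => o So.
have HB0 : Bnd (ens U o) O != 0.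
  by apply: contra So => /eqP HB0; rewrite /pU HB0 mul0r.
have Hle : forall b, w o b * (Ohat U O o b - c0) ^+ 2 <=
    pU U O o * outcome_prob (ens U o) rho b * (Bnd (ens U o) O / pU U O o) ^+ 2.
  move=> b; rewrite /Ohat addrK; apply: ler_wpM2l; first by rewrite mulr_ge0.
  apply: sq_div_le => //; first by rewrite mxtrace_mulC; apply: le_Bnd.
apply: le_trans (ler_sum _ (fun b _ => Hle b)) _.
rewrite -mulr_suml -mulr_sumr outcome_sum // mulr1 le_eqVlt; apply/orP; left; apply/eqP.
rewrite /pU; field.
by rewrite HB0 andbT; apply/eqP.
Qed.
Theorem theorem3 (n : nat) (P : {poly gf2})
  (Pirr : irreducible_poly P) (Pdeg : size P = n.+1)
  (U : 'I_(2 ^ n) -> 'M[algC]_(2 ^ n)) (HU : mub_family P U)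
  (O : 'M[algC]_(2 ^ n)) (HO : is_hermitian O)
  (HOnot : ~ exists c : algC, O = c%:M)
  (rho : 'M[algC]_(2 ^ n)) (Hrho : is_density rho) :
  variance U O rho <= Btot U O ^+ 2 /\
  Btot U O ^+ 2 <= stab_norm (traceless O) ^+ 2.
Proof.
have n1 : (0 < n)%N by case: Pirr; rewrite Pdeg.
have HUu : forall v, adj (U v) *m U v = 1%:M.
  by move=> v; have [[Hu _] _] := HU v (Ordinal n1).
split; first exact: part1.
have H0 : 0 <= stab_norm (traceless O).
  by rewrite mulr_ge0 ?invr_ge0 ?ler0n // sumr_ge0.
rewrite ler_pXn2r ?nnegrE ?Btot_ge0 //.
exact: (part2 Pirr Pdeg HU HUu).
Qed.
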